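(* In the setting of the context, write $A_1=\mathrm{SYM}$, $A_2=\mathrm{SR}$, $A_3=\mathrm{SUPP}$, $A_4=\mathrm{LF}$, $A_5=\mathrm{M}$, and $U_1=U_3=U_4=\Lambda_1=\Lambda_3=\Lambda_4=\mathbb{C}^N$. Suppose: (a) $U_2$ is a neighborhood of a point $x_2\in A_2$ such that $P_{A_2}$ is pointwise $\alpha$-firmly nonexpansive with $\alpha=1/2$ on $U_2$ at each point of $\Lambda_2:=P_{A_2}^{-1}(A_2\cap U_2)\cap U_2$; and $U_5$ is a neighborhood of a point $x_5\in A_5$ such that $A_5$ is $\epsilon$-super-regular at a distance at $x_5$ relative to $\Lambda_5:=P_{A_5}^{-1}(A_5\cap U_5)\cap U_5$ with constant $\epsilon_{U_5}$ on $U_5$. Then: (i) if moreover $\epsilon_{U_5}\in[0,4\sqrt2/7-5/7)$, then for $j=1,\dots,5$ the reflector $R_{A_j}$ is pointwise almost nonexpansive with violation $\tilde\epsilon_j$ at each point of $\Lambda_j$ on $U_j$, where $\tilde\epsilon_1=\tilde\epsilon_2=\tilde\epsilon_3=\tilde\epsilon_4=0$ and $\tilde\epsilon_5=8\epsilon_{U_5}(1+\epsilon_{U_5})/(1-\epsilon_{U_5})^2$; (ii) if moreover $\epsilon_{U_5}\in[0,2\sqrt3/3-1)$, then for $j=1,\dots,5$ the projector $P_{A_j}$ is pointwise almost $\alpha$-firmly nonexpansive with constant $\alpha_j=1/2$ and violation $\check\epsilon_j$ at each point of $\Lambda_j$ on $U_j$, where $\check\epsilon_1=\check\epsilon_2=\check\epsilon_3=\check\epsilon_4=0$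 and $\check\epsilon_5=4\epsilon_{U_5}(1+\epsilon_{U_5})/(1-\epsilon_{U_5})^2$.
   Context: Let $N=N_xN_yN_z$; vectors $u\in\mathbb{C}^N$ are arrays indexed by $\mathbb I=\{1,\dots,N_x\}\times\{1,\dots,N_y\}\times\{1,\dots,N_z\}$; $\mathbb{C}^N\cong\mathbb{R}^{2N}$ carries the real inner product $\langle x,y\rangle=\mathrm{Re}\sum_k\overline{x_k}y_k$ and Euclidean norm. Let $\mathcal F:\mathbb{C}^N\to\mathbb{C}^{\widehat N}$ be the discrete Fourier transform, $\widehat u=\mathcal Fu$, entries indexed by $\widehat{\mathbb I}$ with grid points $(\hat x_i,\hat y_j,\hat z_l)\in\mathbb{R}^3$. Given: $\mathbb S\subset\widehat{\mathbb I}$, data $b_{(i,j,l)}\ge0$ for $(i,j,l)\in\mathbb S$, a ball $B_{\bar r}\subset\mathbb{R}^3$, a symmetric binary mask $\omega\in\{0,1\}^N$, an integer $s>0$. Sets: $\mathrm{M}=\{u: |\widehat u_{(i,j,l)}|=b_{(i,j,l)}\ \forall (i,j,l)\in\mathbb S\}$; $\mathrm{LF}=\{u: \widehat u_{(i,j,l)}=0 \text{ whenever } (\hat x_i,\hat y_j,\hat z_l)\notin B_{\bar r}\}$; $\mathrm{SUPP}=\{u:\omega_{(i,j,l)}u_{(i,j,l)}=u_{(i,j,l)}\ \forall(i,j,l)\}$; $\mathrm{SR}=\{u:\|u\|_0\le s,\ \mathrm{Im}(u)=0\}$ ($\|u\|_0$ = number of nonzero entries); $\mathrm{SYM}=\{u: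 u_{(i,j,l)}=u_{(N_x-i+1,j,l)}=-u_{(i,N_y-j+1,l)}=-u_{(i,j,N_z-l+1)}\ \forall(i,j,l)\}$. For closed nonempty $A$: $P_Ax=\operatorname{argmin}_{a\in A}\|a-x\|$ (possibly set-valued), $R_A=2P_A-\mathrm{Id}$, and $P_A^{-1}(S)=\{x: P_Ax\cap S\neq\emptyset\}$. Proximal normal cone: $N^P_A(a)=\mathrm{cone}(P_A^{-1}(a)-a)$ for $a\in A$. $\epsilon$-super-regularity at a distance: a set $\Omega$ is $\epsilon$-super-regular at a distance relative to $\Lambda$ at $\bar x$ with constant $\epsilon_U$ on the open set $U\ni\bar x$ if $\langle v-(y'-y),\,y-x\rangle\le\epsilon_U\|v-(y'-y)\|\,\|y-x\|$ for all $y'\in U\cap\Lambda$, all $y\in P_\Omega(y')$, and all $(x,v)$ with $v\in N^P_\Omega(x)$, $x+v\in U$, $x\in P_\Omega(x+v)$. A map $T$ is pointwise almost nonexpansive at $y$ on $U$ with violation $\epsilon\in[0,1)$ if $\|x^+-y^+\|\le\sqrt{1+\epsilon}\|x-y\|$ for all $x\in U$, $x^+\in Tx$, $y^+\in Ty$; pointwise almost $\alpha$-firmly nonexpansive ($\alpha\in(0,1)$) at $y$ on $U$ with violation $\epsilon\in[0,1)$ if $\|x^+-y^+\|^2\le(1+\epsilon)\|x-y\|^2-\frac{1-\alpha}{\alpha}\|(x^+-x)-(y^+-y)\|^2$ for all such $x,x^+,y^+$; ''$\alpha$-firmly nonexpansive'' means violation $0$. *)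

(* Defs.v *)
From mathcomp Require Import all_boot all_order all_algebra.
From mathcomp Require Import complex.
From mathcomp Require Import reals trigo.

Set Implicit Arguments.
Unset Strict Implicit.
Unset Printing Implicit Defensive.

Import Order.TTheory GRing.Theory Num.Theory.
Local Open Scope ring_scope.
Local Open Scope complex_scope.

Section Defs.
Variable R : realType.
Variables Nx Ny Nz : nat.

(* index set I = {1..Nx} x {1..Ny} x {1..Nz}, represented 0-based *)
Definition idx := ('I_Nx * 'I_Ny * 'I_Nz)%type.

Definition vec := {ffun idx -> R[i]}.

Definition inner (x y : vec) : R := complex.Re (\sum_(k : idx) (x k)^* * y k).
Definition norm (x : vec) : R := Num.sqrt (inner x x).

Definition rscale (a : R) (x : vec) : vec := (a%:C) *: x.

(* the (unnormalized) 3-D discrete Fourier transform; hat-I = I *)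
Definition expi (t : R) : R[i] := (cos t) +i* (sin t).
Definition dft (u : vec) : vec :=
  [ffun k : idx =>
     \sum_(j : idx) u j *
       expi (- (2 * pi) *
             ((nat_of_ord j.1.1 * nat_of_ord k.1.1)%:R / Nx%:R
            + (nat_of_ord j.1.2 * nat_of_ord k.1.2)%:R / Ny%:R
            + (nat_of_ord j.2 * nat_of_ord k.2)%:R / Nz%:R))].

Definition Mset (S : {set idx}) (b : idx -> R) (u : vec) : Prop :=
  forall k, k \in S -> `|dft u k| = (b k)%:C.

Definition in_ball (c1 c2 c3 r : R) (p1 p2 p3 : R) : Prop :=
  (p1 - c1) ^+ 2 + (p2 - c2) ^+ 2 + (p3 - c3) ^+ 2 <= r ^+ 2.

Definition LFset (xh : 'I_Nx -> R) (yh : 'I_Ny -> R) (zh : 'I_Nz -> R)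
  (c1 c2 c3 r : R) (u : vec) : Prop :=
  forall k : idx, ~ in_ball c1 c2 c3 r (xh k.1.1) (yh k.1.2) (zh k.2) ->
    dft u k = 0.

Definition SUPPset (omega : idx -> bool) (u : vec) : Prop :=
  forall k, ((omega k : nat)%:R * u k) = u k.

Definition SRset (s : nat) (u : vec) : Prop :=
  (#|[set k : idx | u k != 0%R]| <= s)%N /\ forall k, complex.Im (u k) = 0.

(* SYM : the symmetry set; index i |-> N_x - i + 1 is rev_ord (0-based) *)
Definition SYMset (u : vec) : Prop :=
  forall (i : 'I_Nx) (j : 'I_Ny) (l : 'I_Nz),
    u (i, j, l) = u (rev_ord i, j, l) /\
    u (i, j, l) = - u (i, rev_ord j, l) /\
    u (i, j, l) = - u (i, j, rev_ord l).

Definition mask_sym (omega : idx -> bool) : Prop :=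
  forall (i : 'I_Nx) (j : 'I_Ny) (l : 'I_Nz),
    omega (i, j, l) = omega (rev_ord i, j, l) /\
    omega (i, j, l) = omega (i, rev_ord j, l) /\
    omega (i, j, l) = omega (i, j, rev_ord l).

Definition proj (A : vec -> Prop) (x p : vec) : Prop :=
  A p /\ forall a, A a -> norm (p - x) <= norm (a - x).

Definition refl (A : vec -> Prop) (x z : vec) : Prop :=
  exists p, proj A x p /\ z = rscale 2 p - x.

Definition projinv (A S : vec -> Prop) (x : vec) : Prop :=
  exists p, proj A x p /\ S p.

Definition prox_normal (A : vec -> Prop) (a v : vec) : Prop :=
  exists (lam : R) (z : vec), 0 <= lam /\ proj A z a /\ v = rscale lam (z - a).

Definition is_open (U : vec -> Prop) : Prop :=
  forall x, U x -> exists e : R, 0 < e /\ forall y, norm (y - x) < e -> U y.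

Definition super_reg_dist (Om Lam : vec -> Prop) (xbar : vec) (epsU : R)
  (U : vec -> Prop) : Prop :=
  is_open U /\ U xbar /\
  forall y' y x v : vec,
    U y' -> Lam y' -> proj Om y' y ->
    prox_normal Om x v -> U (x + v) -> proj Om (x + v) x ->
    inner (v - (y' - y)) (y - x) <= epsU * norm (v - (y' - y)) * norm (y - x).

Definition pt_almost_nonexp (T : vec -> vec -> Prop) (y : vec)
  (U : vec -> Prop) (eps : R) : Prop :=
  0 <= eps < 1 /\
  forall x xp yp, U x -> T x xp -> T y yp ->
    norm (xp - yp) <= Num.sqrt (1 + eps) * norm (x - y).

Definition pt_almost_afne (T : vec -> vec -> Prop) (y : vec)
  (U : vec -> Prop) (alpha eps : R) : Prop :=
  0 < alpha < 1 /\ 0 <= eps < 1 /\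
  forall x xp yp, U x -> T x xp -> T y yp ->
    norm (xp - yp) ^+ 2 <=
      (1 + eps) * norm (x - y) ^+ 2
      - (1 - alpha) / alpha * norm ((xp - x) - (yp - y)) ^+ 2.

Definition pt_afne (T : vec -> vec -> Prop) (y : vec)
  (U : vec -> Prop) (alpha : R) : Prop :=
  pt_almost_afne T y U alpha 0.

Definition Lam_of (A U : vec -> Prop) (y : vec) : Prop :=
  projinv A (fun a => A a /\ U a) y /\ U y.

Definition full (y : vec) : Prop := True.

End Defs.
Arguments full {R Nx Ny Nz} y.

(* Main.v *)
Require Import Defs.
From mathcomp Require Import all_boot all_order all_algebra.
From mathcomp Require Import complex.
From mathcomp Require Import reals trigo.
From mathcomp Require Import ring lra.
Import Order.TTheory GRing.Theory Num.Theory.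
Local Open Scope ring_scope.
Set Implicit Arguments.
Unset Strict Implicit.
Unset Printing Implicit Defensive.


Notation cRe := complex.Re.
Notation cIm := complex.Im.
Section H.
Variable R : realType.
Variables Nx Ny Nz : nat.
Local Notation vec := (vec R Nx Ny Nz).
Local Notation idx := (idx Nx Ny Nz).

Definition ip (x y : vec) : R :=
  \sum_(k : idx) (cRe (x k) * cRe (y k) + cIm (x k) * cIm (y k)).

Lemma ReD (a b : R[i]) : cRe (a + b) = cRe a + cRe b.
Proof. by case: a; case: b. Qed.
Lemma ImD (a b : R[i]) : cIm (a + b) = cIm a + cIm b.
Proof. by case: a; case: b. Qed.

Lemma inner_ip x y : inner x y = ip x y.
Proof.
rewrite /inner /ip (big_morph (@cRe R) ReD (erefl _)).
apply: eq_bigr => k _; case: (x k) => a b; case: (y k) => c d /=; by rewrite mulNr opprK.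
Qed.

Lemma two_C : ((2 : R)%:C)%C = 2 :> R[i].
Proof. by apply/eqP; rewrite eq_complex /= eqxx /= ?addr0 ?eqxx. Qed.

Lemma one_C : ((1 : R)%:C)%C = 1 :> R[i].
Proof. by []. Qed.

Lemma vtest (x y xp yp : vec) : x - y = (xp - yp) + ((x - xp) - (y - yp)).
Proof. apply/ffunP => k; rewrite !ffunE; have h (a b c d : R[i]) : a - b = c - d + (a - c - (b - d)) by ring.
exact: h. Qed.

Lemma vtest2 (x y xp yp : vec) : (rscale 2 xp - x) - (rscale 2 yp - y) = (xp - yp) - ((x - xp) - (y - yp)).
Proof. apply/ffunP => k; rewrite !ffunE.
have h (a b c d : R[i]) : 2 * c - a - (2 * d - b) = c - d - (a - c - (b - d)) by ring.
rewrite two_C; exact: h. Qed.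

Lemma ReN (a : R[i]) : cRe (- a) = - cRe a. Proof. by case: a. Qed.
Lemma ImN (a : R[i]) : cIm (- a) = - cIm a. Proof. by case: a. Qed.
Lemma ReZ (t : R) (a : R[i]) : cRe ((t%:C)%C * a) = t * cRe a.
Proof. case: a => c d /=. by rewrite mul0r subr0. Qed.
Lemma ImZ (t : R) (a : R[i]) : cIm ((t%:C)%C * a) = t * cIm a.
Proof. case: a => c d /=. by rewrite mul0r addr0. Qed.

Lemma ipDl x y z : ip (x + y) z = ip x z + ip y z.
Proof.
rewrite /ip -big_split; apply: eq_bigr => k _; rewrite !ffunE ReD ImD /=; by rewrite !mulrDl addrACA.
Qed.
Lemma ipNl x z : ip (- x) z = - ip x z.
Proof.
rewrite /ip -sumrN; apply: eq_bigr => k _; rewrite !ffunE ReN ImN; by rewrite !mulNr opprD.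
Qed.
Lemma ipBl x y z : ip (x - y) z = ip x z - ip y z.
Proof. by rewrite ipDl ipNl. Qed.
Lemma ipZl t x z : ip (rscale t x) z = t * ip x z.
Proof.
rewrite /ip mulr_sumr; apply: eq_bigr => k _; rewrite !ffunE ReZ ImZ; by rewrite mulrDr !mulrA.
Qed.
Lemma ipC x y : ip x y = ip y x.
Proof. rewrite /ip; apply: eq_bigr => k _; by rewrite mulrC (mulrC (cIm _)). Qed.
Lemma ipDr x y z : ip z (x + y) = ip z x + ip z y.
Proof. by rewrite ipC ipDl ipC (ipC y). Qed.
Lemma ipNr x z : ip z (- x) = - ip z x.
Proof. by rewrite ipC ipNl ipC. Qed.
Lemma ipBr x y z : ip z (x - y) = ip z x - ip z y.
Proof. by rewrite ipDr ipNr. Qed.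
Lemma ip_ge0 x : 0 <= ip x x.
Proof. apply: sumr_ge0 => k _; apply: addr_ge0; exact: sqr_ge0. Qed.

Lemma norm_ip (x : vec) : norm x = Num.sqrt (ip x x).
Proof. by rewrite /norm inner_ip. Qed.
Lemma norm_ge0 (x : vec) : 0 <= norm x.
Proof. exact: sqrtr_ge0. Qed.
Lemma norm_sq (x : vec) : norm x ^+ 2 = ip x x.
Proof. by rewrite norm_ip sqr_sqrtr // ip_ge0. Qed.
Lemma normN (x : vec) : norm (- x) = norm x.
Proof. by rewrite !norm_ip ipNl ipNr opprK. Qed.
Lemma norm_addsq (a w : vec) : norm (a + w) ^+ 2 = norm a ^+ 2 + 2 * ip a w + norm w ^+ 2.
Proof. rewrite !norm_sq ipDl !ipDr (ipC w a); ring. Qed.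
Lemma norm_subsq (a w : vec) : norm (a - w) ^+ 2 = norm a ^+ 2 - 2 * ip a w + norm w ^+ 2.
Proof. rewrite !norm_sq ipDl !ipDr !ipNl !ipNr (ipC w a); ring. Qed.

Lemma core (a w : vec) (e eta : R) : 0 <= e -> 0 <= eta -> e <= eta * (1 - e) ->
  - ip a w <= e * norm a * norm w ->
  0 <= eta * norm (a + w) ^+ 2 + 2 * ip a w.
Proof.
move=> he heta hee hc; rewrite norm_addsq.
have hA := norm_ge0 a; have hW := norm_ge0 w.
move: hc; set A := norm a; set W := norm w; set c := ip a w => hc.
have h1 : 2 * eta * A * W <= eta * (A ^+ 2 + W ^+ 2).
  have : 0 <= eta * (A - W) ^+ 2 by apply: mulr_ge0 => //; exact: sqr_ge0.
  move=> h; nra.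
have h2 : - (2 * c * (1 + eta)) <= 2 * e * A * W * (1 + eta).
  have h1e : 0 <= 2 * (1 + eta) by lra.
  have := ler_wpM2r h1e hc; nra.
have h3 : 0 <= A * W * (eta * (1 - e) - e).
  apply: mulr_ge0; [exact: mulr_ge0 | lra].
nra.
Qed.

Lemma vneg (x y xp yp : vec) : (xp - x) - (yp - y) = - ((x - xp) - (y - yp)).
Proof.
apply/ffunP => k; rewrite !ffunE.
have h (a b c d : R[i]) : c - a - (d - b) = - (a - c - (b - d)) by ring.
exact: h.
Qed.

Lemma half_const : (1 - 1 / 2) / (1 / 2) = 1 :> R.
Proof. by field. Qed.

Lemma fin_afne (x y xp yp : vec) (e eta : R) : 0 <= e -> 0 <= eta -> e <= eta * (1 - e) ->
  - ip (xp - yp) ((x - xp) - (y - yp)) <= e * norm (xp - yp) * norm ((x - xp) - (y - yp)) ->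
  norm (xp - yp) ^+ 2 <= (1 + eta) * norm (x - y) ^+ 2
     - (1 - 1 / 2) / (1 / 2) * norm ((xp - x) - (yp - y)) ^+ 2.
Proof.
move=> he heta hee hc; have := @core _ _ _ _ he heta hee hc.
rewrite (vtest x y xp yp) (vneg x y xp yp) normN half_const mul1r.
rewrite norm_addsq => h; lra.
Qed.

Lemma fin_refl (x y xp yp : vec) (e eta : R) : 0 <= e -> 0 <= eta -> e <= eta * (1 - e) ->
  - ip (xp - yp) ((x - xp) - (y - yp)) <= e * norm (xp - yp) * norm ((x - xp) - (y - yp)) ->
  norm ((rscale 2 xp - x) - (rscale 2 yp - y)) <= Num.sqrt (1 + 2 * eta) * norm (x - y).
Proof.
move=> he heta hee hc; have := @core _ _ _ _ he heta hee hc.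
rewrite vtest2 (vtest x y xp yp).
set a := xp - yp; set w := x - xp - (y - yp) => h.
have hsq : norm (a - w) ^+ 2 <= (1 + 2 * eta) * norm (a + w) ^+ 2.
  move: h; rewrite norm_subsq norm_addsq => h; lra.
have hQ : 0 <= Num.sqrt (1 + 2 * eta) * norm (a + w).
  apply: mulr_ge0; [exact: sqrtr_ge0 | exact: norm_ge0].
have hP := norm_ge0 (a - w).
have hQ2 : (Num.sqrt (1 + 2 * eta) * norm (a + w)) ^+ 2 = (1 + 2 * eta) * norm (a + w) ^+ 2.
  by rewrite exprMn sqr_sqrtr //; lra.
move: hsq; rewrite -hQ2; move: hP hQ.
set P := norm (a - w); set Q := Num.sqrt (1 + 2 * eta) * norm (a + w).
move=> hP hQ hPQ; nra.
Qed.

Lemma quad0 (c d : R) : 0 <= d -> (forall t, 0 <= 2 * t * c + t ^+ 2 * d) -> c = 0.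
Proof.
move=> hd h.
have hd1 : d + 1 != 0 by rewrite lt0r_neq0 //; lra.
pose t := - c / (d + 1).
have hc : c = - (t * (d + 1)) by rewrite /t; field.
have := h t; rewrite hc => h1.
have h2 : 0 <= t ^+ 2 * d by apply: mulr_ge0 => //; exact: sqr_ge0.
have h3 : t ^+ 2 <= 0 by nra.
have h4 : t ^+ 2 = 0 by apply/eqP; rewrite eq_le h3 sqr_ge0.
by move/eqP: h4; rewrite sqrf_eq0 => /eqP ->; rewrite mul0r oppr0.
Qed.

Lemma sub_orth (A : vec -> Prop) :
  (forall p q t, A p -> A q -> A (p + rscale t q)) ->
  forall x p a, proj A x p -> A a -> ip (x - p) a = 0.
Proof.
move=> cl x p a [hp hmin] ha.
suff : ip (p - x) a = 0.
  by move=> h; rewrite -opprB ipNl h oppr0.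
apply: (@quad0 _ (ip a a)); first exact: ip_ge0.
move=> t.
have := hmin _ (cl p a t hp ha); rewrite addrAC.
have h0 := norm_ge0 (p - x).
move=> hle.
have hsq : norm (p - x) ^+ 2 <= norm (p - x + rscale t a) ^+ 2.
  have h1 := norm_ge0 (p - x + rscale t a); nra.
move: hsq; rewrite (norm_addsq (p - x)) !norm_sq (ipC (p - x)) !ipZl (ipC a) (ipC a (rscale t a)) ipZl.
move=> h; nra.
Qed.

Lemma sub_ip (A : vec -> Prop) :
  (forall p q t, A p -> A q -> A (p + rscale t q)) ->
  (forall p q, A p -> A q -> A (p - q)) ->
  forall x y xp yp, proj A x xp -> proj A y yp ->
  ip (xp - yp) ((x - xp) - (y - yp)) = 0.
Proof.
move=> cl1 cl2 x y xp yp hx hy.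
have hA : A (xp - yp) by apply: cl2; [case: hx | case: hy].
rewrite ipBr (ipC _ (x - xp)) (ipC _ (y - yp)).
by rewrite (@sub_orth A cl1 _ _ _ hx hA) (@sub_orth A cl1 _ _ _ hy hA) subrr.
Qed.

Lemma sub_nonexp (A : vec -> Prop) :
  (forall p q t, A p -> A q -> A (p + rscale t q)) ->
  (forall p q, A p -> A q -> A (p - q)) ->
  forall y (U : vec -> Prop), pt_almost_nonexp (refl A) y U 0.
Proof.
move=> cl1 cl2 y U; split; first by rewrite lexx ltr01.
move=> x xp yp _ [p [hp ->]] [q [hq ->]].
have h := @sub_ip A cl1 cl2 _ _ _ _ hp hq.
have hc : - ip (p - q) ((x - p) - (y - q)) <= 0 * norm (p - q) * norm ((x - p) - (y - q)).
  by rewrite h oppr0 !mul0r.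
have h00 : (0 : R) <= 0 * (1 - 0) by rewrite mul0r.
have := @fin_refl _ _ _ _ 0 0 (lexx 0) (lexx 0) h00 hc.
by rewrite mulr0.
Qed.

Lemma sub_afne (A : vec -> Prop) :
  (forall p q t, A p -> A q -> A (p + rscale t q)) ->
  (forall p q, A p -> A q -> A (p - q)) ->
  forall y (U : vec -> Prop), pt_almost_afne (proj A) y U (1 / 2) 0.
Proof.
move=> cl1 cl2 y U; split; first by apply/andP; split; lra.
split; first by rewrite lexx ltr01.
move=> x p q _ hp hq.
have h := @sub_ip A cl1 cl2 _ _ _ _ hp hq.
have hc : - ip (p - q) ((x - p) - (y - q)) <= 0 * norm (p - q) * norm ((x - p) - (y - q)).
  by rewrite h oppr0 !mul0r.
have h00 : (0 : R) <= 0 * (1 - 0) by rewrite mul0r.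
have := @fin_afne _ _ _ _ 0 0 (lexx 0) (lexx 0) h00 hc.
by [].
Qed.

Lemma sym_cl1 (p q : vec) t : SYMset p -> SYMset q -> SYMset (p + rscale t q).
Proof.
move=> Hp Hq i j l; have [p1 [p2 p3]] := Hp i j l; have [q1 [q2 q3]] := Hq i j l.
have h (a b c : R[i]) : - a + c * - b = - (a + c * b) by ring.
rewrite /rscale !ffunE; split; first by rewrite p1 q1.
by split; [rewrite p2 q2 | rewrite p3 q3]; rewrite scalerN opprD.
Qed.
Lemma sym_cl2 (p q : vec) : SYMset p -> SYMset q -> SYMset (p - q).
Proof.
move=> Hp Hq i j l; have [p1 [p2 p3]] := Hp i j l; have [q1 [q2 q3]] := Hq i j l.
rewrite !ffunE; split; first by rewrite p1 q1.
by split; [rewrite p2 q2 | rewrite p3 q3]; rewrite opprD.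
Qed.

Lemma supp_cl1 om (p q : vec) t : SUPPset om p -> SUPPset om q -> SUPPset om (p + rscale t q).
Proof.
move=> Hp Hq k; rewrite /rscale !ffunE.
have h (w a b c : R[i]) : w * a = a -> w * b = b -> w * (a + c * b) = a + c * b.
  by move=> ha hb; rewrite mulrDr mulrCA ha hb.

exact: h (Hp k) (Hq k).
Qed.
Lemma supp_cl2 om (p q : vec) : SUPPset om p -> SUPPset om q -> SUPPset om (p - q).
Proof.
move=> Hp Hq k; rewrite !ffunE.
have h (w a b : R[i]) : w * a = a -> w * b = b -> w * (a - b) = a - b.
  by move=> ha hb; rewrite mulrBr ha hb.
exact: h (Hp k) (Hq k).
Qed.

Lemma dft_lin1 (p q : vec) t k : dft (p + rscale t q) k = dft p k + (t%:C)%C * dft q k.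
Proof.
rewrite /dft !ffunE mulr_sumr -big_split; apply: eq_bigr => j _.
rewrite /rscale !ffunE.
have h (a b c e : R[i]) : (a + c * b) * e = a * e + c * (b * e) by ring.
exact: h.
Qed.
Lemma dft_lin2 (p q : vec) k : dft (p - q) k = dft p k - dft q k.
Proof.
rewrite /dft !ffunE -sumrB; apply: eq_bigr => j _.
rewrite !ffunE; exact: mulrBl.
Qed.

Lemma lf_cl1 xh yh zh c1 c2 c3 r (p q : vec) t :
  LFset xh yh zh c1 c2 c3 r p -> LFset xh yh zh c1 c2 c3 r q ->
  LFset xh yh zh c1 c2 c3 r (p + rscale t q).
Proof. by move=> Hp Hq k hk; rewrite dft_lin1 Hp // Hq // mulr0 addr0. Qed.
Lemma lf_cl2 xh yh zh c1 c2 c3 r (p q : vec) :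
  LFset xh yh zh c1 c2 c3 r p -> LFset xh yh zh c1 c2 c3 r q ->
  LFset xh yh zh c1 c2 c3 r (p - q).
Proof. by move=> Hp Hq k hk; rewrite dft_lin2 Hp // Hq // subr0. Qed.
End H.

Lemma eta_facts (R : realType) (e : R) : 0 <= e -> e < 1 ->
  0 <= 4 * e * (1 + e) / (1 - e) ^+ 2 /\ e <= 4 * e * (1 + e) / (1 - e) ^+ 2 * (1 - e).
Proof.
move=> he he1.
have hp : 0 < 1 - e by lra.
have hp2 : 0 < (1 - e) ^+ 2 by apply: exprn_gt0.
split; first by apply: divr_ge0; [nra | exact: ltW].
have -> : 4 * e * (1 + e) / (1 - e) ^+ 2 * (1 - e) = 4 * e * (1 + e) / (1 - e).
  by field; rewrite lt0r_neq0.
by rewrite ler_pdivlMr //; nra.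
Qed.

Lemma eps_i (R : realType) (e : R) : 0 <= e < 4 * Num.sqrt 2 / 7 - 5 / 7 ->
  e < 1 /\ 0 <= 8 * e * (1 + e) / (1 - e) ^+ 2 < 1.
Proof.
move=> /andP [he he1].
have hs : Num.sqrt 2 ^+ 2 = 2 :> R by rewrite sqr_sqrtr.
have hs0 : 0 <= Num.sqrt 2 :> R by exact: sqrtr_ge0.
have h7 : 7 * e + 5 < 4 * Num.sqrt 2 by lra.
have hq : 7 * e ^+ 2 + 10 * e - 1 < 0 by nra.
have hlt : e < 1 by nra.
have hp2 : 0 < (1 - e) ^+ 2 by apply: exprn_gt0; lra.
split => //; apply/andP; split.
  by apply: divr_ge0; [nra | exact: ltW].
by rewrite ltr_pdivrMr //; nra.
Qed.

Lemma eps_ii (R : realType) (e : R) : 0 <= e < 2 * Num.sqrt 3 / 3 - 1 ->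
  e < 1 /\ 0 <= 4 * e * (1 + e) / (1 - e) ^+ 2 < 1.
Proof.
move=> /andP [he he1].
have hs : Num.sqrt 3 ^+ 2 = 3 :> R by rewrite sqr_sqrtr.
have hs0 : 0 <= Num.sqrt 3 :> R by exact: sqrtr_ge0.
have h7 : 3 * e + 3 < 2 * Num.sqrt 3 by lra.
have hq : 3 * e ^+ 2 + 6 * e - 1 < 0 by nra.
have hlt : e < 1 by nra.
have hp2 : 0 < (1 - e) ^+ 2 by apply: exprn_gt0; lra.
split => //; apply/andP; split.
  by apply: divr_ge0; [nra | exact: ltW].
by rewrite ltr_pdivrMr //; nra.
Qed.


Theorem lemma4 (R : realType) (Nx Ny Nz : nat)
  (S : {set idx Nx Ny Nz}) (b : idx Nx Ny Nz -> R)
  (xh : 'I_Nx -> R) (yh : 'I_Ny -> R) (zh : 'I_Nz -> R)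
  (c1 c2 c3 rbar : R) (omega : idx Nx Ny Nz -> bool) (s : nat)
  (U2 U5 : vec R Nx Ny Nz -> Prop) (x2 x5 : vec R Nx Ny Nz) (eps5 : R) :
  let A1 := @SYMset R Nx Ny Nz in
  let A2 := @SRset R Nx Ny Nz s in
  let A3 := @SUPPset R Nx Ny Nz omega in
  let A4 := @LFset R Nx Ny Nz xh yh zh c1 c2 c3 rbar in
  let A5 := @Mset R Nx Ny Nz S b in
  let Lam2 := Lam_of A2 U2 in
  let Lam5 := Lam_of A5 U5 in
  (forall k, k \in S -> 0 <= b k) ->
  0 < rbar ->
  mask_sym omega ->
  (0 < s)%N ->
  (* (a) *)
  A2 x2 -> is_open U2 -> U2 x2 ->
  (forall y, Lam2 y -> pt_afne (proj A2) y U2 (1 / 2)) ->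
  A5 x5 -> is_open U5 -> U5 x5 ->
  super_reg_dist A5 Lam5 x5 eps5 U5 ->
  (* (i) *)
  ((0 <= eps5 < 4 * Num.sqrt 2 / 7 - 5 / 7) ->
     (forall y, full y -> pt_almost_nonexp (refl A1) y full 0) /\
     (forall y, Lam2 y -> pt_almost_nonexp (refl A2) y U2 0) /\
     (forall y, full y -> pt_almost_nonexp (refl A3) y full 0) /\
     (forall y, full y -> pt_almost_nonexp (refl A4) y full 0) /\
     (forall y, Lam5 y -> pt_almost_nonexp (refl A5) y U5
        (8 * eps5 * (1 + eps5) / (1 - eps5) ^+ 2))) /\
  (* (ii) *)
  ((0 <= eps5 < 2 * Num.sqrt 3 / 3 - 1) ->
     (forall y, full y -> pt_almost_afne (proj A1) y full (1 / 2) 0) /\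
     (forall y, Lam2 y -> pt_almost_afne (proj A2) y U2 (1 / 2) 0) /\
     (forall y, full y -> pt_almost_afne (proj A3) y full (1 / 2) 0) /\
     (forall y, full y -> pt_almost_afne (proj A4) y full (1 / 2) 0) /\
     (forall y, Lam5 y -> pt_almost_afne (proj A5) y U5 (1 / 2)
        (4 * eps5 * (1 + eps5) / (1 - eps5) ^+ 2))).
Proof.
move=> A1 A2 A3 A4 A5 Lam2 Lam5 hb hr hom hs hx2 hU2o hU2 hafne hx5 hU5o hU5 hsr.
have s1 : forall (p q : vec R Nx Ny Nz) t, A1 p -> A1 q -> A1 (p + rscale t q).
  by move=> p q t; apply: sym_cl1.
have s2 : forall (p q : vec R Nx Ny Nz), A1 p -> A1 q -> A1 (p - q).
  by move=> p q; apply: sym_cl2.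
have u1 : forall (p q : vec R Nx Ny Nz) t, A3 p -> A3 q -> A3 (p + rscale t q).
  by move=> p q t; apply: supp_cl1.
have u2 : forall (p q : vec R Nx Ny Nz), A3 p -> A3 q -> A3 (p - q).
  by move=> p q; apply: supp_cl2.
have l1 : forall (p q : vec R Nx Ny Nz) t, A4 p -> A4 q -> A4 (p + rscale t q).
  by move=> p q t; apply: lf_cl1.
have l2 : forall (p q : vec R Nx Ny Nz), A4 p -> A4 q -> A4 (p - q).
  by move=> p q; apply: lf_cl2.
have key5 : forall y, Lam5 y -> forall x p q, U5 x -> proj A5 x p -> proj A5 y q ->
    - ip (p - q) ((x - p) - (y - q)) <= eps5 * norm (p - q) * norm ((x - p) - (y - q)).
  move=> y hy x p q hx hp hq.
  have hUy : U5 y by case: hy.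
  case: hsr => _ [_ Hs].
  have hpn : prox_normal A5 p (x - p).
    exists 1, x; split; first exact: ler01.
    split => //; apply/ffunP => k; rewrite /rscale !ffunE one_C; by rewrite scale1r.
  have hxp : p + (x - p) = x by rewrite addrC subrK.
  have := Hs y q p (x - p) hUy hy hq hpn; rewrite hxp => /(_ hx hp).
  rewrite inner_ip -(opprB p q) ipNr normN (ipC (x - p - (y - q))) => h.
  by rewrite mulrAC.
have key2 : forall y, Lam2 y -> forall x p q, U2 x -> proj A2 x p -> proj A2 y q ->
    - ip (p - q) ((x - p) - (y - q)) <= 0 * norm (p - q) * norm ((x - p) - (y - q)).
  move=> y hy x p q hx hp hq.
  have [_ [_ H]] := hafne y hy.
  have := H x p q hx hp hq.
  rewrite (vtest x y p q) (vneg x y p q) normN half_const mul1r (norm_addsq (p - q)) => h.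
  rewrite !mul0r; lra.
have h00 : (0 : R) <= 0 * (1 - 0) by rewrite mul0r.
split.
  move=> heps; have [he1 /andP [hv0 hv1]] := eps_i heps.
  have he : 0 <= eps5 by case/andP: heps.
  have [hn0 hn1] := eta_facts he he1.
  split; first by move=> y _; apply: sub_nonexp.
  split.
    move=> y hy; split; first by rewrite lexx ltr01.
    move=> x xp yp hx [p [hp ->]] [q [hq ->]].
    have := fin_refl (lexx 0) (lexx 0) h00 (key2 y hy x p q hx hp hq).
    by rewrite mulr0.
  split; first by move=> y _; apply: sub_nonexp.
  split; first by move=> y _; apply: sub_nonexp.
  move=> y hy; split; first by rewrite hv0 hv1.
  move=> x xp yp hx [p [hp ->]] [q [hq ->]].
  have := fin_refl he hn0 hn1 (key5 y hy x p q hx hp hq).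
  have -> : 8 * eps5 * (1 + eps5) / (1 - eps5) ^+ 2 =
            2 * (4 * eps5 * (1 + eps5) / (1 - eps5) ^+ 2) by ring.
  by [].
move=> heps; have [he1 /andP [hv0 hv1]] := eps_ii heps.
have he : 0 <= eps5 by case/andP: heps.
have [hn0 hn1] := eta_facts he he1.
split; first by move=> y _; apply: sub_afne.
split; first by move=> y hy; exact: hafne.
split; first by move=> y _; apply: sub_afne.
split; first by move=> y _; apply: sub_afne.
move=> y hy; split; first by apply/andP; split; lra.
split; first by rewrite hv0 hv1.
move=> x p q hx hp hq.
exact: fin_afne he hn0 hn1 (key5 y hy x p q hx hp hq).
Qed.
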